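(* Let $(q_0,q_1,\eta_0,\eta_1,U)$ be a restricted attack with respect to the computational basis ($\ket{v_i}=\ket{i}$), with forward isometry $\mathcal{F}$ and vectors $\ket{e},\ket{f}\in\mathcal{H}_E$ as in the context. Let $\mathcal{H}_{A_1}=\mathcal{H}_{A_2}=\mathcal{H}_B=\mathbb{C}^2$. Define the linear map $\mathbf{Rw}:\mathrm{span}\{\ket{00},\ket{11}\}\subseteq\mathcal{H}_{A_1A_2}\to\mathcal{H}_{A_1A_2E}$ by \[ \mathbf{Rw}\ket{00}=\frac{q_0\ket{0}\ket{0}\ket{0}_E+\sqrt{1-q_1^2}\ket{1}\ket{0}\ket{f}}{\sqrt{1-q_1^2+q_0^2}},\qquad \mathbf{Rw}\ket{11}=\frac{\sqrt{1-q_0^2}\ket{0}\ket{1}\ket{e}+q_1\ket{1}\ket{1}\ket{0}_E}{\sqrt{1-q_0^2+q_1^2}} \] (factors ordered $A_1A_2E$; if a denominator vanishes, the corresponding image is an arbitrary unit vector). Set $p_0=\tfrac12(1-q_1^2+q_0^2)$ and $p_1=1-p_0=\tfrac12(1-q_0^2+q_1^2)$. Consider: (SQKD, entanglement version) the state $(I_{A_1}\otimes\mathcal{F})\ket{\Phi^+}_{A_1A_2}$ with $\ket{\Phi^+}=\tfrac{1}{\sqrt2}(\ket{00}+\ket{11})$ and $\mathcal{F}$ acting $A_2\to A_2E$, tensored with $\ket{0}_B$, followed by Bob's operation $O$ on $A_2B$ ($O=I$ for Reflect, $O=\mathrm{CNOT}_{A_2\to B}$ for Measure and Resend), followed by $U$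 on $A_2E$; ($\Pi^*$) Bob prepares $\sqrt{p_0}\ket{000}_{A_1A_2B}+\sqrt{p_1}\ket{110}_{A_1A_2B}$ (Reflect) or $\sqrt{p_0}\ket{000}_{A_1A_2B}+\sqrt{p_1}\ket{111}_{A_1A_2B}$ (Measure and Resend), then $\mathbf{Rw}$ is applied to $A_1A_2$ (producing $A_1A_2E$), then $U$ is applied to $A_2E$. Then $\mathbf{Rw}$ is an isometry, and in each of the two modes (Reflect, Measure and Resend) the final pure state on $A_1A_2BE$ produced by the SQKD version equals that produced by $\Pi^*$. Consequently, if Bob chooses Measure and Resend with the same probability in both protocols, the single-round density operators $\rho_{ABE}$ (SQKD version) and $\sigma_{ABE}$ ($\Pi^*$ under the attack $(p_0,(I_{A_1}\otimes U)\mathbf{Rw})$) coincide.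
   Context: $\mathcal{H}_E$ is a finite-dimensional Hilbert space with fixed orthonormal vectors $\ket 0_E,\ket 1_E$; $\mathbb{D}=\{z\in\mathbb{C}:|z|\le1\}$. A restricted attack with respect to the computational basis is a tuple $(q_0,q_1,\eta_0,\eta_1,U)$ with $q_0,q_1\in[0,1]$, $\eta_0,\eta_1\in\mathbb{D}$ satisfying $q_0\eta_1\sqrt{1-q_1^2}+q_1\overline{\eta_0}\sqrt{1-q_0^2}=0$, and $U$ a unitary on $\mathbb{C}^2\otimes\mathcal{H}_E$. Its forward isometry is $\mathcal{F}:\mathbb{C}^2\to\mathbb{C}^2\otimes\mathcal{H}_E$, $\mathcal{F}\ket{0}=q_0\ket{0}\ket{0}_E+\sqrt{1-q_0^2}\ket{1}\ket{e}$, $\mathcal{F}\ket{1}=\sqrt{1-q_1^2}\ket{0}\ket{f}+q_1\ket{1}\ket{0}_E$, where $\ket{e}=\eta_0\ket{0}_E+\sqrt{1-|\eta_0|^2}\ket{1}_E$ and $\ket{f}=\eta_1\ket{0}_E+\sqrt{1-|\eta_1|^2}\ket{1}_E$. $\mathrm{CNOT}_{A_2\to B}\ket{t}_{A_2}\ket{b}_B=\ket{t}_{A_2}\ket{b\oplus t}_B$. *)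

(* Defs.v *)
From HB Require Import structures.
From mathcomp Require Import all_boot all_order all_algebra.
Set Implicit Arguments. Unset Strict Implicit. Unset Printing Implicit Defensive.
Import Order.TTheory GRing.Theory Num.Theory.
Local Open Scope ring_scope.

Section SQKD.
Variables (C : numClosedFieldType) (n : nat).

Definition ind (b : bool) : C := if b then 1 else 0.

(* H_E = C^n; vectors of H_E are coordinate functions *)
Definition Evec := 'I_n -> C.
Definition dotE (u v : Evec) : C := \sum_(x < n) (u x)^* * v x.

(* vectors of H_{A1} (x) H_{A2} (x) H_E ; qubit basis indexed by bool *)
Definition st3 := bool -> bool -> 'I_n -> C.
Definition dot3 (u v : st3) : C :=
  \sum_(a1 : bool) \sum_(a2 : bool) \sum_(x < n) (u a1 a2 x)^* * v a1 a2 x.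

(* vectors of H_{A1} (x) H_{A2} (x) H_B (x) H_E (factor order A1 A2 B E) *)
Definition st4 := bool -> bool -> bool -> 'I_n -> C.

(* operators on C^2 (x) H_E, given by matrix entries  U (t,x) (t',x') *)
Definition opE := bool -> 'I_n -> bool -> 'I_n -> C.

Definition unitary_opE (U : opE) : Prop :=
  (forall j x j' x', \sum_(k : bool) \sum_(g < n) (U k g j x)^* * U k g j' x'
                     = ind ((j == j') && (x == x'))) /\
  (forall j x j' x', \sum_(k : bool) \sum_(g < n) U j x k g * (U j' x' k g)^*
                     = ind ((j == j') && (x == x'))).

Definition orthonormal2 (e0 e1 : Evec) : Prop :=
  [/\ dotE e0 e0 = 1, dotE e1 e1 = 1 & dotE e0 e1 = 0].

Definition restricted_params (q0 q1 eta0 eta1 : C) : Prop :=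
  [/\ 0 <= q0 <= 1, 0 <= q1 <= 1, `|eta0| <= 1, `|eta1| <= 1 &
      q0 * eta1 * sqrtC (1 - q1 ^+ 2) + q1 * eta0^* * sqrtC (1 - q0 ^+ 2) = 0].

(* |e> = eta |0>_E + sqrt(1-|eta|^2) |1>_E *)
Definition vecE (e0 e1 : Evec) (eta : C) : Evec :=
  fun x => eta * e0 x + sqrtC (1 - `|eta| ^+ 2) * e1 x.

(* forward isometry: fwd i = F|i>, a vector of C^2 (x) H_E *)
Definition fwd (q0 q1 : C) (e0 ev fv : Evec) (i : bool) : bool -> Evec :=
  fun t x =>
    if i then sqrtC (1 - q1 ^+ 2) * ind (~~ t) * fv x + q1 * ind t * e0 x
    else q0 * ind (~~ t) * e0 x + sqrtC (1 - q0 ^+ 2) * ind t * ev x.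

Definition applyU (U : opE) (psi : st4) : st4 :=
  fun a1 a2 b x => \sum_(k : bool) \sum_(g < n) U a2 x k g * psi a1 k b g.

Definition cnotA2B (psi : st4) : st4 := fun a1 a2 b x => psi a1 a2 (b (+) a2) x.

(* Bob's operation; mode m = false : Reflect, m = true : Measure and Resend *)
Definition bobO (m : bool) (psi : st4) : st4 := if m then cnotA2B psi else psi.

(* the Rw map; w00, w11 are the "arbitrary unit vectors" used when the
   corresponding denominator vanishes *)
Definition Rw00 (q0 q1 : C) (e0 fv : Evec) (w00 : st3) : st3 :=
  if 1 - q1 ^+ 2 + q0 ^+ 2 == 0 then w00 else
  fun a1 a2 x =>
    (q0 * ind (~~ a1 && ~~ a2) * e0 x + sqrtC (1 - q1 ^+ 2) * ind (a1 && ~~ a2) * fv x)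
    / sqrtC (1 - q1 ^+ 2 + q0 ^+ 2).

Definition Rw11 (q0 q1 : C) (e0 ev : Evec) (w11 : st3) : st3 :=
  if 1 - q0 ^+ 2 + q1 ^+ 2 == 0 then w11 else
  fun a1 a2 x =>
    (sqrtC (1 - q0 ^+ 2) * ind (~~ a1 && a2) * ev x + q1 * ind (a1 && a2) * e0 x)
    / sqrtC (1 - q0 ^+ 2 + q1 ^+ 2).

Definition sqkd_state (q0 q1 : C) (e0 ev fv : Evec) (U : opE) (m : bool) : st4 :=
  applyU U (bobO m (fun a1 a2 b x =>
     ind (~~ b) * sqrtC (2^-1) * fwd q0 q1 e0 ev fv a1 a2 x)).

Definition pistar_state (q0 q1 : C) (e0 ev fv : Evec) (w00 w11 : st3)
    (U : opE) (m : bool) : st4 :=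
  let p0 := (1 - q1 ^+ 2 + q0 ^+ 2) / 2 in
  let p1 := (1 - q0 ^+ 2 + q1 ^+ 2) / 2 in
  applyU U (fun a1 a2 b x =>
     sqrtC p0 * ind (~~ b) * Rw00 q0 q1 e0 fv w00 a1 a2 x
   + sqrtC p1 * ind (b == m) * Rw11 q0 q1 e0 ev w11 a1 a2 x).

Definition round_density (pm : C) (st : bool -> st4) :
    bool -> bool -> bool -> 'I_n -> bool -> bool -> bool -> 'I_n -> C :=
  fun a1 a2 b x a1' a2' b' x' =>
    (1 - pm) * st false a1 a2 b x * (st false a1' a2' b' x')^*
  + pm * st true a1 a2 b x * (st true a1' a2' b' x')^*.

End SQKD.

(* Main.v *)
Require Import Defs.
From HB Require Import structures.
From mathcomp Require Import all_boot all_order all_algebra.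
From mathcomp Require Import ring lra.
Import Order.TTheory GRing.Theory Num.Theory.
Local Open Scope ring_scope.

Section H.
Variables (C : numClosedFieldType) (n : nat).

Lemma dotE_form (a b c d : C) (u v u' v' : Evec C n) :
  dotE (fun x => a * u x + b * v x) (fun x => c * u' x + d * v' x) =
  a^* * c * dotE u u' + a^* * d * dotE u v' + b^* * c * dotE v u' + b^* * d * dotE v v'.
Proof.
rewrite /dotE !mulr_sumr -!big_split /=; apply: eq_bigr => x _.
rewrite !rmorphD !rmorphM /=; ring.
Qed.

Lemma dotE_ext (u v u' v' : Evec C n) :
  (forall x, u x = u' x) -> (forall x, v x = v' x) -> dotE u v = dotE u' v'.
Proof. by move=> h1 h2; apply: eq_bigr => x _; rewrite h1 h2. Qed.

Lemma dot3_form (A B A' B' : bool -> bool -> C) (u v u' v' : Evec C n) :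
  dot3 (fun a1 a2 x => A a1 a2 * u x + B a1 a2 * v x)
       (fun a1 a2 x => A' a1 a2 * u' x + B' a1 a2 * v' x) =
  \sum_(a1 : bool) \sum_(a2 : bool)
    ((A a1 a2)^* * A' a1 a2 * dotE u u' + (A a1 a2)^* * B' a1 a2 * dotE u v'
     + (B a1 a2)^* * A' a1 a2 * dotE v u' + (B a1 a2)^* * B' a1 a2 * dotE v v').
Proof.
rewrite /dot3; apply: eq_bigr => a1 _; apply: eq_bigr => a2 _.
exact: (dotE_form (A a1 a2) (B a1 a2) (A' a1 a2) (B' a1 a2) u v u' v').
Qed.

Lemma dot3_ext (u v u' v' : st3 C n) :
  (forall a1 a2 x, u a1 a2 x = u' a1 a2 x) -> (forall a1 a2 x, v a1 a2 x = v' a1 a2 x) ->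
  dot3 u v = dot3 u' v'.
Proof.
move=> h1 h2; apply: eq_bigr => a1 _; apply: eq_bigr => a2 _;
  apply: eq_bigr => x _; by rewrite h1 h2.
Qed.

Lemma dotE_conj (u v : Evec C n) : dotE v u = (dotE u v)^*.
Proof.
rewrite /dotE rmorph_sum; apply: eq_bigr => x _.
rewrite rmorphM /=; by rewrite conjCK mulrC.
Qed.

Lemma vecE_unit (e0 e1 : Evec C n) eta :
  orthonormal2 e0 e1 -> `|eta| <= 1 -> dotE (vecE e0 e1 eta) (vecE e0 e1 eta) = 1.
Proof.
move=> [h0 h1 h01] he.
have hr : 0 <= 1 - `|eta| ^+ 2 by rewrite subr_ge0 exprn_ile1.
rewrite /vecE dotE_form h0 h1 h01 (dotE_conj e0 e1) h01 rmorph0.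
have hs : 0 <= sqrtC (1 - `|eta| ^+ 2) by rewrite sqrtC_ge0.
rewrite (geC0_conj hs).
rewrite -expr2 sqrtCK normCK; ring.
Qed.

End H.
Theorem theorem2 (C : numClosedFieldType) (n : nat)
    (e0 e1 : Evec C n) (q0 q1 eta0 eta1 : C) (U : opE C n)
    (w00 w11 : st3 C n) :
  orthonormal2 e0 e1 ->
  restricted_params q0 q1 eta0 eta1 ->
  unitary_opE U ->
  let ev := vecE e0 e1 eta0 in
  let fv := vecE e0 e1 eta1 in
  let R00 := Rw00 q0 q1 e0 fv w00 in
  let R11 := Rw11 q0 q1 e0 ev w11 in
  (* choice of the arbitrary unit vectors *)
  dot3 w00 w00 = 1 -> dot3 w11 w11 = 1 ->
  (1 - q1 ^+ 2 + q0 ^+ 2 = 0 -> dot3 w00 R11 = 0) ->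
  (1 - q0 ^+ 2 + q1 ^+ 2 = 0 -> dot3 R00 w11 = 0) ->
  (* Rw is an isometry *)
  [/\ dot3 R00 R00 = 1, dot3 R11 R11 = 1, dot3 R00 R11 = 0,
  (* in both modes the final states coincide *)
   (forall (m a1 a2 b : bool) (x : 'I_n),
      sqkd_state q0 q1 e0 ev fv U m a1 a2 b x
      = pistar_state q0 q1 e0 ev fv w00 w11 U m a1 a2 b x) &
  (* hence the single-round density operators coincide *)
   (forall (pm : C), 0 <= pm <= 1 ->
      forall a1 a2 b x a1' a2' b' x',
      round_density pm (sqkd_state q0 q1 e0 ev fv U) a1 a2 b x a1' a2' b' x'
      = round_density pm (pistar_state q0 q1 e0 ev fv w00 w11 U)
          a1 a2 b x a1' a2' b' x')].
Proof.
move=> hon hpar hU ev fv R00 R11 hw00 hw11 hz0 hz1.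
case: hpar => /andP[q0ge q0le] /andP[q1ge q1le] he0 he1 _.
have [h00 h11 h01] := hon.
have cq0 : q0^* = q0 by rewrite geC0_conj.
have cq1 : q1^* = q1 by rewrite geC0_conj.
have r0ge : 0 <= 1 - q0 ^+ 2 by rewrite subr_ge0 exprn_ile1.
have r1ge : 0 <= 1 - q1 ^+ 2 by rewrite subr_ge0 exprn_ile1.
have d0ge : 0 <= 1 - q1 ^+ 2 + q0 ^+ 2 by rewrite addr_ge0 // exprn_ge0.
have d1ge : 0 <= 1 - q0 ^+ 2 + q1 ^+ 2 by rewrite addr_ge0 // exprn_ge0.
have csr : forall y : C, 0 <= y -> (sqrtC y)^* = sqrtC y.
  by move=> y hy; rewrite geC0_conj // sqrtC_ge0.
have hev : dotE ev ev = 1 by exact: vecE_unit.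
have hfv : dotE fv fv = 1 by exact: vecE_unit.
have iso00 : dot3 R00 R00 = 1.
  rewrite /R00 /Rw00; case: ifP => [_|/eqP hnz]; first exact: hw00.
  set S := sqrtC (1 - q1 ^+ 2 + q0 ^+ 2).
  have hS : S != 0 by rewrite sqrtC_eq0; apply/eqP.
  pose A := fun a1 a2 : bool => q0 * ind C (~~ a1 && ~~ a2) / S.
  pose B := fun a1 a2 : bool => sqrtC (1 - q1 ^+ 2) * ind C (a1 && ~~ a2) / S.
  rewrite (@dot3_ext _ _ _ _ (fun a1 a2 x => A a1 a2 * e0 x + B a1 a2 * fv x)
       (fun a1 a2 x => A a1 a2 * e0 x + B a1 a2 * fv x)); last first.
    1,2: by move=> a1 a2 x; rewrite /A /B; ring.
  rewrite dot3_form !big_bool /= /A /B /ind /= h00 hfv.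
  rewrite !(rmorphM, fmorphV, rmorph0, rmorph1) /= cq0 !csr //.
  have hS2 : S ^+ 2 = q0 ^+ 2 + sqrtC (1 - q1 ^+ 2) ^+ 2.
    by rewrite !sqrtCK addrC.
  rewrite -/S; clearbody S.
  transitivity ((q0 ^+ 2 + sqrtC (1 - q1 ^+ 2) ^+ 2) / S ^+ 2); first by field.
  by rewrite -hS2 divff // expf_neq0.
have iso11 : dot3 R11 R11 = 1.
  rewrite /R11 /Rw11; case: ifP => [_|/eqP hnz]; first exact: hw11.
  set S := sqrtC (1 - q0 ^+ 2 + q1 ^+ 2).
  have hS : S != 0 by rewrite sqrtC_eq0; apply/eqP.
  pose A := fun a1 a2 : bool => sqrtC (1 - q0 ^+ 2) * ind C (~~ a1 && a2) / S.
  pose B := fun a1 a2 : bool => q1 * ind C (a1 && a2) / S.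
  rewrite (@dot3_ext _ _ _ _ (fun a1 a2 x => A a1 a2 * ev x + B a1 a2 * e0 x)
       (fun a1 a2 x => A a1 a2 * ev x + B a1 a2 * e0 x)); last first.
    1,2: by move=> a1 a2 x; rewrite /A /B; ring.
  rewrite dot3_form !big_bool /= /A /B /ind /= h00 hev.
  rewrite !(rmorphM, fmorphV, rmorph0, rmorph1) /= cq1 !csr //.
  have hS2 : S ^+ 2 = q1 ^+ 2 + sqrtC (1 - q0 ^+ 2) ^+ 2.
    by rewrite !sqrtCK addrC.
  rewrite -/S; clearbody S.
  transitivity ((q1 ^+ 2 + sqrtC (1 - q0 ^+ 2) ^+ 2) / S ^+ 2); first by field.
  by rewrite -hS2 divff // expf_neq0.
have iso01 : dot3 R00 R11 = 0.
  case: (eqVneq (1 - q1 ^+ 2 + q0 ^+ 2) 0) => hd0.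
    have -> : R00 = w00 by rewrite /R00 /Rw00 hd0 eqxx.
    exact: hz0.
  case: (eqVneq (1 - q0 ^+ 2 + q1 ^+ 2) 0) => hd1.
    have -> : R11 = w11 by rewrite /R11 /Rw11 hd1 eqxx.
    exact: hz1.
  rewrite /R00 /R11 /Rw00 /Rw11 (negbTE hd0) (negbTE hd1).
  set S0 := sqrtC (1 - q1 ^+ 2 + q0 ^+ 2).
  set S1 := sqrtC (1 - q0 ^+ 2 + q1 ^+ 2).
  pose A := fun a1 a2 : bool => q0 * ind C (~~ a1 && ~~ a2) / S0.
  pose B := fun a1 a2 : bool => sqrtC (1 - q1 ^+ 2) * ind C (a1 && ~~ a2) / S0.
  pose A' := fun a1 a2 : bool => sqrtC (1 - q0 ^+ 2) * ind C (~~ a1 && a2) / S1.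
  pose B' := fun a1 a2 : bool => q1 * ind C (a1 && a2) / S1.
  rewrite (@dot3_ext _ _ _ _ (fun a1 a2 x => A a1 a2 * e0 x + B a1 a2 * fv x)
       (fun a1 a2 x => A' a1 a2 * ev x + B' a1 a2 * e0 x)); last first.
    1,2: by move=> a1 a2 x; rewrite /A /B /A' /B'; ring.
  rewrite dot3_form !big_bool /= /A /B /A' /B' /ind /=.
  rewrite !(rmorphM, fmorphV, rmorph0, rmorph1) /=.
  rewrite -/S0 -/S1; clearbody S0 S1; ring.
have K00 : forall a1 a2 x, sqrtC ((1 - q1 ^+ 2 + q0 ^+ 2) / 2) * Rw00 q0 q1 e0 fv w00 a1 a2 x
   = sqrtC (2^-1) * (q0 * ind C (~~ a1 && ~~ a2) * e0 x + sqrtC (1 - q1 ^+ 2) * ind C (a1 && ~~ a2) * fv x).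
  move=> a1 a2 x; rewrite /Rw00; case: ifP => [/eqP hd|/eqP hd].
    move: (hd) => /eqP; rewrite paddr_eq0 ?exprn_ge0 // => /andP[/eqP ha /eqP hb].
    have hq : q0 = 0 by apply/eqP; move/eqP: hb; rewrite expf_eq0.
    rewrite hd mul0r sqrtC0 ha sqrtC0 hq; ring.
  rewrite (sqrtCM (x := 1 - q1 ^+ 2 + q0 ^+ 2)); last 2 first.
    - by rewrite nnegrE.
    - by rewrite nnegrE invr_ge0 ler0n.
  have : sqrtC (1 - q1 ^+ 2 + q0 ^+ 2) != 0 by rewrite sqrtC_eq0; apply/eqP.
  move: (sqrtC (1 - q1 ^+ 2 + q0 ^+ 2)) => S hS; by field.
have K11 : forall a1 a2 x, sqrtC ((1 - q0 ^+ 2 + q1 ^+ 2) / 2) * Rw11 q0 q1 e0 ev w11 a1 a2 x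
   = sqrtC (2^-1) * (sqrtC (1 - q0 ^+ 2) * ind C (~~ a1 && a2) * ev x + q1 * ind C (a1 && a2) * e0 x).
  move=> a1 a2 x; rewrite /Rw11; case: ifP => [/eqP hd|/eqP hd].
    move: (hd) => /eqP; rewrite paddr_eq0 ?exprn_ge0 // => /andP[/eqP ha /eqP hb].
    have hq : q1 = 0 by apply/eqP; move/eqP: hb; rewrite expf_eq0.
    rewrite hd mul0r sqrtC0 ha sqrtC0 hq; ring.
  rewrite (sqrtCM (x := 1 - q0 ^+ 2 + q1 ^+ 2)); last 2 first.
    - by rewrite nnegrE.
    - by rewrite nnegrE invr_ge0 ler0n.
  have : sqrtC (1 - q0 ^+ 2 + q1 ^+ 2) != 0 by rewrite sqrtC_eq0; apply/eqP.
  move: (sqrtC (1 - q0 ^+ 2 + q1 ^+ 2)) => S hS; by field.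
have pre : forall m a1 a2 b x,
   bobO m (fun a1 a2 b x => ind C (~~ b) * sqrtC (2^-1) * fwd q0 q1 e0 ev fv a1 a2 x) a1 a2 b x
   = sqrtC ((1 - q1 ^+ 2 + q0 ^+ 2) / 2) * ind C (~~ b) * Rw00 q0 q1 e0 fv w00 a1 a2 x
   + sqrtC ((1 - q0 ^+ 2 + q1 ^+ 2) / 2) * ind C (b == m) * Rw11 q0 q1 e0 ev w11 a1 a2 x.
  move=> m a1 a2 b x.
  rewrite [X in _ = X + _]mulrAC [X in _ = _ + X]mulrAC K00 K11.
  by case: m; case: a1; case: a2; case: b; rewrite /bobO /cnotA2B /fwd /ind /=; ring.
have hst : forall (m a1 a2 b : bool) (x : 'I_n),
     sqkd_state q0 q1 e0 ev fv U m a1 a2 b x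
     = pistar_state q0 q1 e0 ev fv w00 w11 U m a1 a2 b x.
  move=> m a1 a2 b x; rewrite /sqkd_state /pistar_state /applyU /=.
  apply: eq_bigr => k _; apply: eq_bigr => g _; congr (_ * _); exact: pre.
split => // pm _ a1 a2 b x a1' a2' b' x'.
by rewrite /round_density !hst.
Qed.
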